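(* Let $c,M\in\mathbb{N}$ with $c,M\ge1$, and let $B_{c,M}=(n_B)_{n\ge0}$ be the periodic sequence defined by $n_B=c$ if $n\ge1$ and $M\mid n$, and $n_B=1$ otherwise (in particular $0_B=1$). Then $B_{c,M}$ is a cobweb tiling sequence.
   Context: Notation: $n_F\equiv F_n$. A sequence $F=(n_F)_{n\ge0}$ of natural numbers with $0_F=1$ is cobweb-admissible iff every $F$-nomial coefficient $\binom{n}{k}_F=\frac{n_F(n-1)_F\cdots(n-k+1)_F}{1_F2_F\cdots k_F}$, $0\le k\le n$, is a nonnegative integer. The cobweb poset of $F$ has, for each $s\ge1$, a level $\Phi_s$ consisting of $s_F$ distinct vertices (levels pairwise disjoint), plus a root level $\Phi_0$ with one vertex; for $x\in\Phi_i$, $y\in\Phi_j$ one has $x<y$ iff $i<j$. For $1\le a\le b$, the layer $\langle\Phi_a\to\Phi_b\rangle$ is the subposet on $\Phi_a\cup\dots\cup\Phi_b$; it has $m=b-a+1$ levels and its maximal chains form the set $\Phi_a\times\dots\times\Phi_b$. For a permutation $\sigma$ of $\{1,\dots,m\}$, a block of type $\sigma P_m$ in this layer is the subposet induced on $V_a\cup\dots\cup V_b$ where $V_{a-1+i}\subseteq\Phi_{a-1+i}$ and $|V_{a-1+i}|=\sigma(i)_F$ for $i=1,\dots,m$; its maximal chains form the set $V_a\times\dots\times V_b$. A tiling of the layer is a finite family of such blocks ($\sigma$ may vary from block to block) whose sets $V_a\times\dots\times V_b$ partition $\Phi_a\times\dots\times\Phi_b$ (pairwise max-disjoint and covering all maximal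 chains). A cobweb tiling sequence is a cobweb-admissible sequence $F$ such that for all $1\le a\le b$ the layer $\langle\Phi_a\to\Phi_b\rangle$ admits a tiling by blocks of type $\sigma P_{b-a+1}$. *)

(* Defs.v *)
From mathcomp Require Import all_boot all_fingroup.
From Stdlib Require List.
Set Implicit Arguments. Unset Strict Implicit. Unset Printing Implicit Defensive.

Definition fnom_num (F : nat -> nat) (n k : nat) : nat := \prod_(i < k) F (n - i).
Definition fnom_den (F : nat -> nat) (k : nat) : nat := \prod_(i < k) F i.+1.

Definition cobweb_admissible (F : nat -> nat) : Prop :=
  F 0 = 1 /\
  forall n k, k <= n -> 0 < fnom_den F k /\ fnom_den F k %| fnom_num F n k.

(* Vertices of level s are represented by the naturals x < s_F.
   For the layer <Phi_a -> Phi_b>, with m = b - a + 1 levels, the level with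
   0-based index i : 'I_m is Phi_(a+i).
   A maximal chain of the layer is an element of Phi_a x ... x Phi_b,
   i.e. a function c : 'I_m -> nat with c i < (a+i)_F. *)
Definition max_chain (F : nat -> nat) (a m : nat) (c : 'I_m -> nat) : Prop :=
  forall i : 'I_m, c i < F (a + i).

(* A block: a permutation sigma of {1..m} (encoded as sigma' in 'S_m on
   {0..m-1}, with sigma(i+1) = sigma'(i) + 1) and, for each level, a subset
   V_(a+i) of Phi_(a+i), given as a duplicate-free list. *)
Record block (m : nat) := Block { bperm : 'S_m ; bsets : 'I_m -> seq nat }.

Definition block_ok (F : nat -> nat) (a m : nat) (B : block m) : Prop :=
  forall i : 'I_m,
    [/\ uniq (bsets B i),
        all (fun x => x < F (a + i)) (bsets B i) &
        size (bsets B i) = F (bperm B i).+1].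

Definition in_block (m : nat) (B : block m) (c : 'I_m -> nat) : bool :=
  [forall i : 'I_m, c i \in bsets B i].

Definition tiling (F : nat -> nat) (a m : nat) (T : seq (block m)) : Prop :=
  (forall B, Stdlib.Lists.List.In B T -> block_ok F a B) /\
  (forall c : 'I_m -> nat, max_chain F a c -> count (fun B => in_block B c) T = 1).

Definition cobweb_tiling_sequence (F : nat -> nat) : Prop :=
  cobweb_admissible F /\
  forall a b, 1 <= a -> a <= b -> exists T : seq (block (b - a + 1)), tiling F a T.

Definition Bcm (c M : nat) (n : nat) : nat :=
  if (0 < n) && (M %| n) then c else 1.

(* Main.v *)
Require Import Defs.
From mathcomp Require Import all_boot all_fingroup.
From Stdlib Require Import Lia.
Set Implicit Arguments. Unset Strict Implicit. Unset Printing Implicit Defensive.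

Lemma Bcm_exp c M x : Bcm c M x = c ^ ((0 < x) && (M %| x)).
Proof. by rewrite /Bcm; case: ifP => _; rewrite ?expn1 ?expn0. Qed.

Lemma sum_den M k : 0 < M ->
  \sum_(i < k) ((0 < i.+1) && (M %| i.+1)) = k %/ M.
Proof.
move=> hM; elim: k => [|k IH]; first by rewrite big_ord0 div0n.
by rewrite big_ord_recr /= IH divnS // addnC.
Qed.

Lemma sum_num M n k : 0 < M -> k <= n ->
  \sum_(i < k) ((0 < n - i) && (M %| n - i)) + (n - k) %/ M = n %/ M.
Proof.
move=> hM; elim: k => [|k IH] hk; first by rewrite big_ord0 subn0.
rewrite big_ord_recr /= subn_gt0 hk /= -addnA.
have -> : (M %| n - k) + (n - k.+1) %/ M = (n - k) %/ M.
  by rewrite -[in RHS](subnSK hk) divnS // subnSK.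
by apply: IH; apply: ltnW.
Qed.

Lemma adm c M : 1 <= c -> 1 <= M -> cobweb_admissible (Bcm c M).
Proof.
move=> hc hM; split; first by [].
move=> n k hk; split.
  rewrite /fnom_den; apply: prodn_gt0 => i; rewrite /Bcm; by case: ifP.
rewrite /fnom_den /fnom_num.
under eq_bigr => i _ do rewrite Bcm_exp.
under [X in _ %| X]eq_bigr => i _ do rewrite Bcm_exp.
rewrite -!expn_sum; apply: dvdn_exp2l.
rewrite sum_den //.
have := sum_num hM hk => E.
have : k %/ M + (n - k) %/ M <= n %/ M.
  by rewrite -[in X in _ <= X](subnKC hk) divnD // leq_addr.
rewrite -E leq_add2r; done.
Qed.

Ltac nlia := repeat match goal with H: is_true (leq _ _) |- _ => move/leP in H end;
  try apply/leP;
  repeat match goal with H: context [addn] |- _ => rewrite -plusE in H end;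
  repeat match goal with H: context [subn] |- _ => rewrite -minusE in H end;
  rewrite -?plusE -?minusE; lia.

Definition rotf (m d : nat) (hm : 0 < m) (i : 'I_m) : 'I_m :=
  Ordinal (ltn_pmod (i + d) hm).

Lemma rotf_inj m d (hm : 0 < m) : injective (rotf d hm).
Proof.
move=> i j /(congr1 val) /= /eqP; rewrite eqn_modDr !modn_small //.
by move/eqP/val_inj.
Qed.

Lemma exists_i0 a M : 0 < M -> exists i0, i0 < M /\ M %| a + i0.
Proof.
move=> hM; exists ((M - a %% M) %% M); split; first exact: ltn_pmod.
rewrite /dvdn modnDmr -modnDml subnKC ?modnn //.
exact/ltnW/ltn_pmod.
Qed.

Lemma keylemma a M m d i0 i : 0 < M -> i0 + d.+1 = M -> M %| a + i0 ->
  i < m -> M %| ((i + d) %% m).+1 -> M %| a + i.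
Proof.
move=> hM hd hai hi.
case: (ltnP (i + d) m) => h.
  rewrite modn_small // => hdiv.
  have E : a + i + M = (i + d).+1 + (a + i0).
    rewrite -hd; rewrite -!plusE; lia.
  have : M %| a + i + M by rewrite E dvdn_add.
  by rewrite dvdn_addl ?dvdnn.
move=> hdiv.
have hs : (i + d) %% m < d.
  case: (ltnP d m) => hdm.
    have E : i + d = (i + d - m) + m by rewrite subnK.
    rewrite E modnDr modn_small.
      by nlia.
      by nlia.
  by apply: leq_trans hdm; apply: ltn_pmod; apply: leq_ltn_trans hi.
have := dvdn_leq (ltn0Sn _) hdiv => h1; exfalso.
move: h1 hs hd; set s := (i + d) %% m => h1 hs hd; nlia.
Qed.

Lemma In_map_filter (A B : Type) (f : A -> B) (p : pred A) (l : seq A)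
  (Q : B -> Prop) : (forall x, p x -> Q (f x)) ->
  forall y, List.In y (map f (filter p l)) -> Q y.
Proof.
move=> H y; elim: l => [|x l IH] //=.
case: ifP => px /=; last exact: IH.
by case=> [<-|]; [apply: H | apply: IH].
Qed.

Definition sig_of m d (hm : 0 < m) : 'S_m := perm (@rotf_inj m d hm).

Definition fullb M m d (hm : 0 < m) (i : 'I_m) : bool :=
  M %| (sig_of d hm i).+1.

Definition blk c M m d (hm : 0 < m) (h : {ffun 'I_m -> 'I_c}) : block m :=
  Block (sig_of d hm) (fun i => if fullb M d hm i then iota 0 c else [:: val (h i)]).

Definition predh c M a m d (hm : 0 < m) (h : {ffun 'I_m -> 'I_c}) : bool :=
  [forall i, if fullb M d hm i then val (h i) == 0 else val (h i) < Bcm c M (a + i)].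

Lemma all_iota_lt n : all (fun x => x < n) (iota 0 n).
Proof. apply/allP => x hx. move: hx. rewrite mem_iota add0n. by case/andP. Qed.

Lemma Bcm_le c M x : 1 <= c -> Bcm c M x <= c.
Proof. by rewrite /Bcm; case: ifP. Qed.

Lemma tiling_ex c M a m : 1 <= c -> 1 <= M -> 0 < a -> 0 < m ->
  exists T : seq (block m), tiling (Bcm c M) a T.
Proof.
case: c => // c _ hM ha hm.
have [i0 [hi0 hai0]] := exists_i0 a hM.
set d := M.-1 - i0.
have hd : i0 + d.+1 = M by rewrite /d; nlia.
have fullF : forall i : 'I_m, fullb M d hm i -> Bcm c.+1 M (a + i) = c.+1.
  move=> i; rewrite /fullb /sig_of permE /= => hf.
  rewrite /Bcm (keylemma hM hd hai0 (ltn_ord i) hf) andbT.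
  by rewrite addn_gt0 ha.
have fullS : forall i : 'I_m,
    Bcm c.+1 M (sig_of d hm i).+1 = if fullb M d hm i then c.+1 else 1.
  by move=> i; rewrite /Bcm /fullb.
exists (map (@blk c.+1 M m d hm) (filter (@predh c.+1 M a m d hm) (enum {ffun 'I_m -> 'I_c.+1}))).
split.
  apply: In_map_filter => h /forallP Hp i.
  have := Hp i; rewrite /blk /= -/(iota 0 c.+1); case: ifP => hf.
    move=> _; split; first exact: iota_uniq.
      by rewrite fullF //; apply: all_iota_lt.
    by rewrite size_iota fullS hf.
  move=> hlt; split => //; first by rewrite /= hlt.
  by rewrite fullS hf.
move=> ch Hch.
rewrite count_map count_filter.
set h0 : {ffun 'I_m -> 'I_c.+1} :=
  [ffun i => inord (if fullb M d hm i then 0 else ch i)].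
have chle : forall i, ch i < c.+1.
  move=> i; apply: leq_trans (Hch i) _; exact: Bcm_le.
rewrite (eq_count (a2 := pred1 h0)); last first.
  move=> h /=; apply/idP/eqP.
    case/andP=> /forallP Hb /forallP Hp; apply/ffunP => i.
    rewrite ffunE; apply/val_inj.
    have := Hp i; have := Hb i; rewrite /blk /=.
    case: ifP => hf /=.
      by move=> _ /eqP ->; rewrite inordK.
    by rewrite mem_seq1 => /eqP -> _; rewrite inordK.
  move=> ->; apply/andP; split; apply/forallP => i; rewrite /blk /= ffunE;
    case: ifP => hf /=.
  - by rewrite -/(iota 0 c.+1) mem_iota add0n /= chle.
  - by rewrite hf inordK ?chle // inE.
  - by rewrite hf inordK.
  - by rewrite hf inordK ?chle // Hch.
by rewrite count_uniq_mem ?enum_uniq ?mem_enum.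
Qed.

Theorem mainTheorem10 (c M : nat) (hc : 1 <= c) (hM : 1 <= M) :
  cobweb_tiling_sequence (Bcm c M).
Proof.
split; first exact: adm.
move=> a b ha hab; apply: tiling_ex => //.
by rewrite addn1.
Qed.
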